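(* Let $k\ge2$ and let $G=(\{a,b\},\varphi,a)$ be a circular D0L-system with $\varphi$ $k$-uniform. Then no vertex of the graph of overhangs $GO_G$ carries two distinct loops (two distinct edges from the vertex to itself).
   Context: A D0L-system $G=(\mathcal{A},\varphi,w)$ has $L(G)=\{\varphi^n(w)\}$ and $S(L(G))$ the set of factors of its words. An interpretation of $u\in S(L(G))$ is $(p,v,s)$ with $v\in S(L(G))$, $\varphi(v)=pus$. With $v=v_1\cdots v_n$, $v'=v'_1\cdots v'_m$, $u=u_1\cdots u_\ell$, interpretations $(p,v,s),(p',v',s')$ are synchronized at position $j$ if $\varphi(v_1\cdots v_i)=pu_1\cdots u_j$ and $\varphi(v'_1\cdots v'_{i'})=p'u_1\cdots u_j$ for some $i,i'$; $u$ has a synchronizing point at $j$ if all its interpretations are pairwise synchronized at $j$. A PD0L-system injective on $S(L(G))$ is circular if there is $Z$ such that every $u\in S(L(G))$ with $|u|>Z$ has a synchronizing point. $\varphi$ is $k$-uniform if $|\varphi(a)|=|\varphi(b)|=k$. Let $X=\{\varphi(a),\varphi(b)\}$. An overhang is a triple $(u_1\cdots u_m,v_1\cdots v_n,|x|)$ with $u_i,v_j\in X$, $x$ nonempty, such that: (i) $x$ is a suffix of $u_1\cdots u_m$ but not of $u_2\cdots u_m$; (ii) $x$ is a prefix of $v_1\cdots v_n$ but not of $v_1\cdots v_{n-1}$; (iii) $x\ne u_1\cdots u_m$ or $x\ne v_1\cdots v_n$; (iv) $|v_1\cdots v_{n-1}|<|x(u_2\cdots u_m)^{-1}|$. Its left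 overhang is $u_1\cdots u_mx^{-1}$, right overhang $x^{-1}v_1\cdots v_n$. $GO_G$ has an edge from $s_1$ to $s_2$ labelled by each overhang with left overhang $s_1$ and right overhang $s_2$. *)

(* Defs.v *)
From HB Require Import structures.
From mathcomp Require Import all_boot.
Set Implicit Arguments. Unset Strict Implicit. Unset Printing Implicit Defensive.

Inductive ab := a | b.

Definition ab_eqb (x y : ab) : bool :=
  match x, y with a, a | b, b => true | _, _ => false end.
Lemma ab_eqP : Equality.axiom ab_eqb.
Proof. by case; case; constructor. Qed.
HB.instance Definition _ := hasDecEq.Build ab ab_eqP.

Definition phiw (phi : ab -> seq ab) (w : seq ab) : seq ab := flatten (map phi w).

(* S(L(G)) for G = ({a,b}, phi, w): factors of the words phi^n(w). *)
Definition factorL (phi : ab -> seq ab) (w u : seq ab) : Prop :=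
  exists n, infix u (iter n (phiw phi) w).

Definition interpretation (phi : ab -> seq ab) (w u p v s : seq ab) : Prop :=
  factorL phi w v /\ phiw phi v = p ++ u ++ s.

Definition cuts_at (phi : ab -> seq ab) (u p v : seq ab) (j : nat) : Prop :=
  exists i, phiw phi (take i v) = p ++ take j u.

Definition synchronized (phi : ab -> seq ab) (u p v p' v' : seq ab) (j : nat) : Prop :=
  cuts_at phi u p v j /\ cuts_at phi u p' v' j.

Definition sync_point (phi : ab -> seq ab) (w u : seq ab) (j : nat) : Prop :=
  j <= size u /\
  forall p v s p' v' s',
    interpretation phi w u p v s -> interpretation phi w u p' v' s' ->
    synchronized phi u p v p' v' j.

(* circular: a PD0L-system, injective on S(L(G)), with a synchronization delay Z *)
Definition circular (phi : ab -> seq ab) (w : seq ab) : Prop :=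
  (forall c, phi c != [::]) /\
  (forall v v', factorL phi w v -> factorL phi w v' -> phiw phi v = phiw phi v' -> v = v') /\
  (exists Z, forall u, factorL phi w u -> Z < size u -> exists j, sync_point phi w u j).

Definition uniform (phi : ab -> seq ab) (k : nat) : Prop := forall c, size (phi c) = k.

Definition inX (phi : ab -> seq ab) (y : seq ab) : bool := (y == phi a) || (y == phi b).

(* (U, V, l) is an overhang, where U = u_1...u_m, V = v_1...v_n, l = |x|. *)
Definition overhang (phi : ab -> seq ab) (U V : seq ab) (l : nat) : Prop :=
  exists (us vs : seq (seq ab)) (x : seq ab),
    [/\ all (inX phi) us, all (inX phi) vs, flatten us = U, flatten vs = V
      & [/\ size x = l /\ x != [::],
            suffix x U && ~~ suffix x (flatten (behead us)),
            prefix x V && ~~ prefix x (flatten (take (size vs).-1 vs)),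
            (x != U) || (x != V)
          & size (flatten (take (size vs).-1 vs))
                          < size x - size (flatten (behead us))]].

Definition left_overhang (U : seq ab) (l : nat) : seq ab := take (size U - l) U.
Definition right_overhang (V : seq ab) (l : nat) : seq ab := drop l V.

(* edges of GO_G: an edge from s1 to s2 for each overhang with left s1, right s2.
   An edge is identified with its label (the overhang triple). *)
Definition GO_edge (phi : ab -> seq ab) (s1 s2 : seq ab) (o : seq ab * seq ab * nat) : Prop :=
  let: (U, V, l) := o in
  [/\ overhang phi U V l, left_overhang U l = s1 & right_overhang V l = s2].

(* Main.v *)
Require Import Defs.
From HB Require Import structures.
From mathcomp Require Import all_boot.
From mathcomp Require Import zify.

Lemma size_flat phi k us : uniform phi k -> all (inX phi) us ->
  size (flatten us) = size us * k.
Proof.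
move=> Hu; elim: us => //= u us IH /andP[Hu1 Hus].
rewrite size_cat IH //.
have -> : size u = k by case/orP: Hu1 => /eqP->.
by rewrite mulSn.
Qed.

Lemma comm_nth (t x : seq ab) : 0 < size t -> t ++ x = x ++ t ->
  forall j, j < size x -> nth a x j = nth a t (j %% size t).
Proof.
move=> Ht Hc j; elim: j {-2}j (leqnn j) => [|N IH] j Hj Hjx;
  have := congr1 (fun w => nth a w j) Hc; rewrite /= !nth_cat Hjx;
  (case: ltnP => Hjt; first by move=> <-; rewrite modn_small).
  lia.
move=> <-; rewrite IH; [|lia|lia].
by rewrite -{2}(subnK Hjt) modnDr.
Qed.

Lemma comm_eq (t x y : seq ab) : 0 < size t -> t ++ x = x ++ t -> t ++ y = y ++ t ->
  size x = size y -> x = y.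
Proof.
move=> Ht Hx Hy Hs; apply: (eq_from_nth (x0:=a)) => // j Hj.
rewrite (@comm_nth t x Ht Hx j Hj) (@comm_nth t y Ht Hy j) //; lia.
Qed.

Lemma loop_shape k phi U V l s : 0 < k -> uniform phi k -> GO_edge phi s s (U, V, l) ->
  exists x, [/\ U = s ++ x, V = x ++ s, inX phi U, inX phi V & [/\ size x = l, size s + l = k & 0 < size s]].
Proof.
move=> Hk Hu [[us [vs [x [Hus Hvs HU HV [[Hxl Hx0] /andP[Hi1 _] /andP[Hii1 _] Hiii Hiv]]]]] Hl Hr].
case: us Hus HU Hi1 Hiv => [|u us'] Hus HU Hi1 Hiv.
  subst U; move: Hi1 => /suffixP [y /esym /eqP]; rewrite -size_eq0 size_cat.
  by move: Hx0; rewrite -size_eq0; lia.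
case/lastP: vs Hvs HV Hii1 Hiv => [|vs' v] Hvs HV Hii1 Hiv.
  subst V; move: Hii1 => /prefixP [y /esym /eqP]; rewrite -size_eq0 size_cat.
  by move: Hx0; rewrite -size_eq0; lia.
move: Hus => /= /andP[Hu1 Hus'].
move: Hvs; rewrite all_rcons => /andP[Hv1 Hvs'].
have Hsu : size u = k by case/orP: Hu1 => /eqP->.
have Hsv : size v = k by case/orP: Hv1 => /eqP->.
move: Hiv; rewrite /= size_rcons /= -cats1 take_size_cat // !(size_flat _ _ _ Hu) // => Hiv.
have HsU : size U = k + size us' * k by rewrite -HU /= size_cat Hsu (size_flat _ _ _ Hu).
have HsV : size V = size vs' * k + k by rewrite -HV -cats1 flatten_cat size_cat (size_flat _ _ _ Hu) //= cats0 Hsv.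
move: Hi1 => /suffixP [y Hy]; move: Hii1 => /prefixP [z Hz].
have Hsy : size U = size y + l by rewrite Hy size_cat Hxl.
have Hsz : size V = l + size z by rewrite Hz size_cat Hxl.
move: Hl Hr; rewrite /left_overhang /right_overhang.
have -> : size U - l = size y by lia.
rewrite Hy take_size_cat // Hz -Hxl drop_size_cat // => Hys Hzs.
subst y z.
have Hm : size us' = 0 /\ size vs' = 0 by nia.
case: Hm => /size0nil Hu0 /size0nil Hv0; subst us' vs'.
move: HU HV; rewrite /= !cats0 => HU HV; subst u v.
exists x; split => //.
  by rewrite -Hy.
  by rewrite -Hz.
split => //; first by rewrite -Hsu Hy size_cat.
rewrite lt0n size_eq0; apply/eqP => Es; move: Hiii; rewrite Hy Hz Es /= cats0 eqxx.
by [].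
Qed.

Arguments loop_shape {k phi U V l s}.

Lemma cancel_l (s x y : seq ab) : s ++ x = s ++ y -> x = y.
Proof. by elim: s => //= c s IH [] /IH. Qed.

Lemma cancel_r (s x y : seq ab) : size x = size y -> x ++ s = y ++ s -> x = y.
Proof. by move=> Hs /eqP; rewrite eqseq_cat // => /andP[/eqP]. Qed.

Lemma c1 (s x : seq ab) : s ++ x = x ++ s -> (s++s)++x = x++(s++s).
Proof. by move=> H; rewrite -catA H catA H catA. Qed.

Lemma c2 (s x y : seq ab) : s ++ x = y ++ s -> s ++ y = x ++ s -> (s++s)++x = x++(s++s).
Proof. by move=> H H'; rewrite -catA H catA H' catA. Qed.

Theorem mainTheorem6 (k : nat) (phi : ab -> seq ab) :
  2 <= k -> uniform phi k -> circular phi [:: a] ->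
  forall (s : seq ab) (o1 o2 : seq ab * seq ab * nat),
    GO_edge phi s s o1 -> GO_edge phi s s o2 -> o1 = o2.
Proof.
move=> Hk Hu _ s [[U1 V1] l1] [[U2 V2] l2] E1 E2.
have Hk0 : 0 < k by lia.
have [x1 [-> -> HU1 HV1 [Hx1 Hs1 Hs]]] := loop_shape Hk0 Hu E1.
have [x2 [-> -> HU2 HV2 [Hx2 Hs2 _]]] := loop_shape Hk0 Hu E2.
have El : l1 = l2 by lia.
subst l2.
suff E : x1 = x2 by rewrite E El.
have Hsz : size x1 = size x2 by lia.
have Hss : 0 < size (s ++ s) by rewrite size_cat; lia.
move: HU1 HU2 HV1 HV2; rewrite /inX.
move=> /orP[/eqP H1|/eqP H1] /orP[/eqP H2|/eqP H2] /orP[/eqP H3|/eqP H3] /orP[/eqP H4|/eqP H4];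
  first [ apply: (cancel_l s); congruence
        | apply: (@cancel_r s) => //; congruence
        | apply: (@comm_eq (s++s)) => //; apply: c1; congruence
        | apply: (@comm_eq (s++s)) => //; [apply: (@c2 s x1 x2) | apply: (@c2 s x2 x1)]; congruence ].
Qed.
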